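(* Let $TS=(S,\Sigma_b\cup\Sigma_r,S_0,R,\le)$ be a process given by a finite set $\Delta$ of labelled rules, and let $P'_0,P'_1,\dots,P'_w$ be the sequence of rule sets defined below. If a configuration $s\in S$ is reachable in $TS(P'_i)$ for some $i\in\{0,\dots,w\}$ (i.e. there is $s_0\in S_0$ with $s_0\xrightarrow{*}s$ in $TS(P'_i)$), then $s$ is reachable in the reconfigurable broadcast network $RBN(TS)$, i.e. there exist an initial configuration $\theta_0\in\Theta_0$, a configuration $\theta$ with $\theta_0\xrightarrow{*}\theta$ in $RBN(TS)$, and a vertex $v$ of $\theta$ with $L_\theta(v)=s$.
   Context: Fix a finite alphabet $\Sigma$; let $\Sigma_b=\{!!a:a\in\Sigma\}$ (broadcast labels) and $\Sigma_r=\{??a:a\in\Sigma\}$ (receive labels). A labelled well-structured transition system (labelled WSTS) is a tuple $(S,\Lambda,S_0,R,\le)$ with $S$ a set of configurations, $\Lambda$ a finite alphabet, $S_0\subseteq S$ the initial configurations, $R\subseteq S\times\Lambda\times S$, and $\le$ a well-quasi-order on $S$ compatible with $R$: if $s_1\le t_1$ and $(s_1,a,s_2)\in R$ then there is $t_2$ with $(t_1,a,t_2)\in R$ and $s_2\le t_2$. A process is a labelled WSTS with $\Lambda=\Sigma_b\cup\Sigma_r$. The process is assumed to be given by a finite description: a finite set $\Delta$ of rules, each rule $t$ carrying a label in $\Sigma_b\cup\Sigma_r$ and inducing a set of transitions of $R$ with that label ($s\xrightarrow{t}s'$ means rule $t$ is enabled at $s$ and produces $s'$), such that $R$ is the union of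 the transitions induced by the rules. For $\Delta'\subseteq\Delta$, $TS(\Delta')$ denotes the system with the same $S,S_0,\le$ but only the transitions induced by rules in $\Delta'$; it is assumed to be again a labelled WSTS. For a rule $t$, $c_t$ denotes the finite set of $\le$-minimal configurations at which $t$ is enabled. For $a\in\Sigma$, $B_a$ is the set of rules labelled $!!a$, $R_a$ the set of rules labelled $??a$, and $Rec=\bigcup_a R_a$. A configuration $c$ is coverable in a system if some reachable configuration $c'$ satisfies $c'\ge c$. Sequence $P'_i$: $P'_0=\Delta\setminus Rec$. For $i\ge1$, let $AddT_i$ be the union of the sets $R_a$ over all letters $a$ not yet handled in an earlier round such that some $t\in B_a$ has some element of $c_t$ coverable in $TS(P'_{i-1})$ (handled letters are then removed from further consideration), and $P'_i=P'_{i-1}\cup AddT_i$; $w$ is the first index with $AddT_{w+1}=\emptyset$, so $P'_w$ is the final rule set. An $S$-graph is a finite undirected graph $(V,E,L)$ without self-loops with labelling $L:V\to S$. $\Theta$ is the set of all finite $S$-graphs, $\Theta_0$ the set of all finite $S_0$-graphs (all labels in $S_0$, arbitrary topology). Broadcast step: $(V,E,L)\xrightarrow{a}(V,E,L')$ if there is $v\in V$ with $(L(v),!!a,L'(v))\in R$, $(L(u),??a,L'(u))\in R$ for every neighbour $u$ of $v$, and $L'(w)=L(w)$ for all other $w$. Reconfiguration step: $(V,E,L)\to(V,E',L)$ for any set $E'$ of edges on $V$ without self-loops. $RBN(TS)$ is the transition system on $\Theta$ with initial set $\Theta_0$ and both kinds of steps. *)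

(* Defs.v *)
From mathcomp Require Import all_boot.
Set Implicit Arguments. Unset Strict Implicit. Unset Printing Implicit Defensive.

(* Labels: !!a (broadcast) and ??a (receive), a in the finite alphabet Sigma. *)
Inductive label (Sigma : Type) : Type :=
| Bc : Sigma -> label Sigma
| Rc : Sigma -> label Sigma.
Arguments Bc {Sigma} a.
Arguments Rc {Sigma} a.

Definition is_recv (Sigma : Type) (l : label Sigma) : bool :=
  if l is Rc _ then true else false.

Section Process.
(* configurations, alphabet, finite rule set Delta (= the finType Rule) *)
Variables (S : Type) (Sigma : finType) (Rule : finType).
Variable le : S -> S -> Prop.
Variable S0 : S -> Prop.
Variable lab : Rule -> label Sigma.
Variable step : Rule -> S -> S -> Prop.

Definition wqo : Prop :=
  (forall x, le x x) /\ (forall x y z, le x y -> le y z -> le x z) /\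
  (forall f : nat -> S, exists i j, (i < j)%N /\ le (f i) (f j)).

Definition R_of (D : Rule -> Prop) (s : S) (l : label Sigma) (s' : S) : Prop :=
  exists t, D t /\ lab t = l /\ step t s s'.

Definition R : S -> label Sigma -> S -> Prop := R_of (fun _ => True).

Definition compatible (D : Rule -> Prop) : Prop :=
  forall s1 t1 l s2, le s1 t1 -> R_of D s1 l s2 ->
    exists t2, R_of D t1 l t2 /\ le s2 t2.

Inductive reach (D : Rule -> Prop) : S -> Prop :=
| reach_init s : S0 s -> reach D s
| reach_step s t s' : reach D s -> D t -> step t s s' -> reach D s'.

Definition coverable (D : Rule -> Prop) (c : S) : Prop :=
  exists c', reach D c' /\ le c c'.

Definition enabled (t : Rule) (s : S) : Prop := exists s', step t s s'.

(* c \in c_t : c is a le-minimal configuration at which t is enabled *)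
Definition in_ct (t : Rule) (c : S) : Prop :=
  enabled t c /\ forall c', enabled t c' -> le c' c -> le c c'.

Definition triggered (D : Rule -> Prop) (a : Sigma) : Prop :=
  exists t, lab t = Bc a /\ exists c, in_ct t c /\ coverable D c.

(* Pseq i = (P'_i, set of letters handled in rounds 1..i) *)
Fixpoint Pseq (i : nat) : (Rule -> Prop) * (Sigma -> Prop) :=
  match i with
  | 0 => (fun t => is_recv (lab t) = false, fun _ => False)
  | i'.+1 =>
      let P := (Pseq i').1 in
      let H := (Pseq i').2 in
      let newl a := ~ H a /\ triggered P a in
      (fun t => P t \/ exists a, newl a /\ lab t = Rc a,
       fun a => H a \/ newl a)
  end.

Definition P' (i : nat) : Rule -> Prop := (Pseq i).1.

(* AddT_i for i >= 1 (AddT_0 is unused; set to empty) *)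
Definition AddT (i : nat) (t : Rule) : Prop :=
  match i with
  | 0 => False
  | i'.+1 => exists a, (~ (Pseq i').2 a /\ triggered (P' i') a) /\ lab t = Rc a
  end.

(* An S-graph with vertex set 'I_n: edge relation E and labelling L.
   Since both kinds of steps keep the vertex set, a run stays on the
   same n. *)
Record sgraph (n : nat) := SGraph { E : rel 'I_n; L : 'I_n -> S }.

Definition valid_edges (n : nat) (E' : rel 'I_n) : Prop :=
  (forall u v, E' u v = E' v u) /\ (forall u, ~~ E' u u).

Definition rbn_step (n : nat) (g g' : sgraph n) : Prop :=
  (E g' = E g /\
   exists (a : Sigma) (v : 'I_n),
     R (L g v) (Bc a) (L g' v) /\
     (forall u, E g v u -> R (L g u) (Rc a) (L g' u)) /\
     (forall w, w != v -> ~~ E g v w -> L g' w = L g w))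
  \/
  (valid_edges (E g') /\ L g' = L g).

Inductive rbn_star (n : nat) : sgraph n -> sgraph n -> Prop :=
| rbn_refl g : rbn_star g g
| rbn_trans g g' g'' : rbn_step g g' -> rbn_star g' g'' -> rbn_star g g''.

Definition rbn_initial (n : nat) (g : sgraph n) : Prop :=
  valid_edges (E g) /\ forall v, S0 (L g v).

Definition rbn_reachable (s : S) : Prop :=
  exists (n : nat) (g0 g : sgraph n),
    rbn_initial g0 /\ rbn_star g0 g /\ exists v, L g v = s.

End Process.

(* Main.v *)
Require Import Defs.
From mathcomp Require Import all_boot.
Set Implicit Arguments. Unset Strict Implicit.

Section Helpers.
Variables (S : Type) (Sigma : finType) (Rule : finType).
Variable lab : Rule -> label Sigma.
Variable step : Rule -> S -> S -> Prop.
Variable S0 : S -> Prop.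

Definition uE n m (e1 : rel 'I_n) (e2 : rel 'I_m) : rel 'I_(n + m) :=
  fun x y => match split x, split y with
             | inl a, inl b => e1 a b
             | inr a, inr b => e2 a b
             | _, _ => false end.
Definition uL n m (l1 : 'I_n -> S) (l2 : 'I_m -> S) : 'I_(n + m) -> S :=
  fun x => match split x with inl a => l1 a | inr b => l2 b end.
Definition ug n m (g : sgraph S n) (h : sgraph S m) : sgraph S (n + m) :=
  SGraph (uE (E g) (E h)) (uL (L g) (L h)).

Lemma valid_uE n m (e1 : rel 'I_n) (e2 : rel 'I_m) :
  valid_edges e1 -> valid_edges e2 -> valid_edges (uE e1 e2).
Proof.
move=> [s1 i1] [s2 i2]; split.
- move=> x y; rewrite /uE.
  by case: (split x) => a; case: (split y) => b; first [exact: s1 | exact: s2 | done].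
- move=> x; rewrite /uE; case: (split x) => a; [exact: i1 | exact: i2].
Qed.

Lemma star_trans n (g1 g2 g3 : sgraph S n) :
  rbn_star lab step g1 g2 -> rbn_star lab step g2 g3 -> rbn_star lab step g1 g3.
Proof.
elim=> [g|g g' g'' st _ IH] // H; apply: rbn_trans st (IH H).
Qed.

Lemma star_snoc n (g1 g2 g3 : sgraph S n) :
  rbn_star lab step g1 g2 -> rbn_step lab step g2 g3 -> rbn_star lab step g1 g3.
Proof.
move=> H1 H2; apply: star_trans H1 _; apply: rbn_trans H2 (rbn_refl _ _ _).
Qed.

Lemma splitL n m (v : 'I_n) : split (lshift m v) = inl v.
Proof. exact: (unsplitK (inl v)). Qed.
Lemma splitR n m (v : 'I_m) : split (rshift n v) = inr v.
Proof. exact: (unsplitK (inr v)). Qed.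
Lemma ordLR n m (x : 'I_(n + m)) :
  (exists a, x = lshift m a) \/ (exists b, x = rshift n b).
Proof.
rewrite -(splitK x); case: (split x) => a; [left|right]; by exists a.
Qed.

Lemma step_liftl n m (g g' : sgraph S n) (h : sgraph S m) :
  valid_edges (E h) ->
  rbn_step lab step g g' -> rbn_step lab step (ug g h) (ug g' h).
Proof.
move=> Vh; case=> [[eE [a [v [Hv [Hn Ho]]]]] | [Hval HL]].
- left; split; first by rewrite /ug eE.
  exists a, (lshift m v); split; first by rewrite /ug /= /uL splitL.
  split.
  + move=> x; case: (ordLR x) => [[b ->]|[b ->]];
      rewrite /ug /= /uE /uL !splitL ?splitR // => Hb; exact: Hn.
  + move=> x; case: (ordLR x) => [[b ->]|[b ->]];
      rewrite /ug /= /uE /uL !splitL ?splitR // => Hne Hb.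
    apply: Ho => //; apply: contra Hne => /eqP -> //.
- right; split; last by rewrite /ug /= HL.
  exact: valid_uE.
Qed.

Lemma step_liftr n m (g : sgraph S n) (h h' : sgraph S m) :
  valid_edges (E g) ->
  rbn_step lab step h h' -> rbn_step lab step (ug g h) (ug g h').
Proof.
move=> Vg; case=> [[eE [a [v [Hv [Hn Ho]]]]] | [Hval HL]].
- left; split; first by rewrite /ug eE.
  exists a, (rshift n v); split; first by rewrite /ug /= /uL splitR.
  split.
  + move=> x; case: (ordLR x) => [[b ->]|[b ->]];
      rewrite /ug /= /uE /uL !splitR ?splitL // => Hb; exact: Hn.
  + move=> x; case: (ordLR x) => [[b ->]|[b ->]];
      rewrite /ug /= /uE /uL !splitR ?splitL // => Hne Hb.
    apply: Ho => //; apply: contra Hne => /eqP -> //.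
- right; split; last by rewrite /ug /= HL.
  exact: valid_uE.
Qed.

Lemma step_valid n (g g' : sgraph S n) :
  valid_edges (E g) -> rbn_step lab step g g' -> valid_edges (E g').
Proof. by move=> V [[-> _]|[V' _]]. Qed.

Lemma star_valid n (g g' : sgraph S n) :
  valid_edges (E g) -> rbn_star lab step g g' -> valid_edges (E g').
Proof.
move=> V H; elim: H V => // g1 g2 g3 st _ IH V; apply: IH; exact: step_valid st.
Qed.

Lemma star_liftl n m (g g' : sgraph S n) (h : sgraph S m) :
  valid_edges (E h) ->
  rbn_star lab step g g' -> rbn_star lab step (ug g h) (ug g' h).
Proof.
move=> Vh; elim=> [g1|g1 g2 g3 st _ IH]; first exact: rbn_refl.
apply: rbn_trans IH; exact: step_liftl.
Qed.

Lemma star_liftr n m (g : sgraph S n) (h h' : sgraph S m) :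
  valid_edges (E g) ->
  rbn_star lab step h h' -> rbn_star lab step (ug g h) (ug g h').
Proof.
move=> Vg; elim=> [g1|g1 g2 g3 st _ IH]; first exact: rbn_refl.
apply: rbn_trans IH; exact: step_liftr.
Qed.

Lemma reach_bc s s' a : rbn_reachable S0 lab step s -> R lab step s (Bc a) s' ->
  rbn_reachable S0 lab step s'.
Proof.
move=> [n [g0 [g [I0 [St [v Hv]]]]]] HR.
pose e := fun _ _ : 'I_n => false.
have Ve : valid_edges e by [].
exists n, g0, (SGraph e (fun x => if x == v then s' else L g x)); split => //.
split; last by exists v; rewrite /= eqxx.
apply: star_snoc; first apply: (star_snoc (g2 := g) (g3 := SGraph e (L g))) => //.
  by right.
left; split => //; exists a, v; split; first by rewrite /= eqxx Hv.
split => // w /negbTE /= -> _ //.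
Qed.

Lemma reach_pair s s' c d a : rbn_reachable S0 lab step s -> rbn_reachable S0 lab step c ->
  R lab step c (Bc a) d -> R lab step s (Rc a) s' -> rbn_reachable S0 lab step s'.
Proof.
move=> [n [g0 [g [[V0 I0] [St [v Hv]]]]]] [m [h0 [h [[W0 J0] [Sh [u Hu]]]]]] Hc Hs.
pose p := lshift m v; pose q := rshift n u.
have pq : p != q.
  by apply/eqP => /(congr1 (@split n m)); rewrite /p /q splitL splitR.
have qp : q != p by rewrite eq_sym.
pose e := fun x y : 'I_(n+m) => ((x == p) && (y == q)) || ((x == q) && (y == p)).
have Ve : valid_edges e.
  split.
  - by move=> x y; rewrite /e orbC (andbC (x == q)) (andbC (x == p)).
  - move=> x; rewrite /e; apply/negP => /orP [/andP [/eqP -> /eqP E]|/andP [/eqP -> /eqP E]].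
    + by rewrite E eqxx in pq.
    + by rewrite E eqxx in pq.
exists (n + m), (ug g0 h0),
  (SGraph e (fun x => if x == q then d else if x == p then s' else L (ug g h) x)).
split.
  split; first exact: valid_uE.
  by move=> x; case: (ordLR x) => [[b ->]|[b ->]]; rewrite /ug /= /uL ?splitL ?splitR.
split; last by exists p; rewrite /= (negbTE pq) eqxx.
apply: star_snoc; first apply: (star_snoc (g2 := ug g h) (g3 := SGraph e (L (ug g h)))).
- apply: star_trans (star_liftl W0 St) _.
  exact: (star_liftr (star_valid V0 St) Sh).
- by right.
left; split => //; exists a, q; split.
  by rewrite /= eqxx /ug /= /uL /q splitR Hu.
split.
- move=> x; rewrite /= /e (negbTE qp) eqxx /= => /eqP ->.
  by rewrite (negbTE pq) eqxx /ug /= /uL /p splitL Hv.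
- move=> w wq; rewrite /= /e (negbTE qp) eqxx /= => wp.
  by rewrite (negbTE wq) (negbTE wp).
Qed.

End Helpers.

Lemma P'_mono (S : Type) (Sigma Rule : finType) le S0 (lab : Rule -> label Sigma)
  (step : Rule -> S -> S -> Prop) i j t :
  (i <= j)%N -> P' le S0 lab step i t -> P' le S0 lab step j t.
Proof.
elim: j => [|j IH]; first by rewrite leqn0 => /eqP ->.
rewrite leq_eqVlt => /orP [/eqP -> //|]; rewrite ltnS => H Pt.
rewrite /P' /=; left; exact: IH.
Qed.

Lemma reach_mono (S : Type) (Rule : finType) S0 (step : Rule -> S -> S -> Prop)
  (D D' : Rule -> Prop) s :
  (forall t, D t -> D' t) -> reach S0 step D s -> reach S0 step D' s.
Proof.
move=> HD; elim=> [s0 H0|s1 t s' _ IH Dt St]; first exact: reach_init.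
exact: reach_step IH (HD _ Dt) St.
Qed.

Lemma P'_char (S : Type) (Sigma Rule : finType) le S0 (lab : Rule -> label Sigma)
  (step : Rule -> S -> S -> Prop) i t :
  P' le S0 lab step i t -> is_recv (lab t) = false \/
  exists a j, (j < i)%N /\ lab t = Rc a /\ triggered le S0 lab step (P' le S0 lab step j) a.
Proof.
elim: i => [|i IH]; first by left.
rewrite /P' /= => [[H|[a [[_ Tr] Hl]]]].
- case: (IH H) => [->|[a [j [ji rest]]]]; first by left.
  by right; exists a, j; split => //; exact: ltnW.
- by right; exists a, i.
Qed.

Lemma main_reach (S : Type) (Sigma : finType) (Rule : finType)
  (le : S -> S -> Prop) (S0 : S -> Prop) (lab : Rule -> label Sigma)
  (step : Rule -> S -> S -> Prop)
  (Hcompat : forall D : Rule -> Prop, compatible le lab step D) i s :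
  reach S0 step (P' le S0 lab step i) s -> rbn_reachable S0 lab step s.
Proof.
elim/ltn_ind: i s => i IHi s H.
elim: H => [s0 H0|s1 t s' _ IH Pt St].
- exists 1, (SGraph (fun _ _ => false) (fun _ => s0)),
         (SGraph (fun _ _ => false) (fun _ => s0)).
  split; first by split.
  split; first exact: rbn_refl.
  by exists ord0.
- case: (P'_char Pt) => [Hl|[a [j [ji [Hl Tr]]]]].
  + move: Hl; case El: (lab t) => [a|a] // _.
    have HR : R lab step s1 (Bc a) s' by exists t.
    exact: reach_bc IH HR.
  + case: Tr => [t' [Hl' [c [[[c'' Stc] _] [c' [Rc' Lec]]]]]].
    have Rc'R := IHi j ji c' Rc'.
    case: (Hcompat (fun _ => True) c c' (Bc a) c'' Lec) => [|d [Hd _]].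
      by exists t'.
    apply: reach_pair IH Rc'R Hd _; exists t; by split.
Qed.

Theorem lemma10 (S : Type) (Sigma : finType) (Rule : finType)
  (le : S -> S -> Prop) (S0 : S -> Prop) (lab : Rule -> label Sigma)
  (step : Rule -> S -> S -> Prop)
  (Hwqo : wqo le)
  (Hcompat : forall D : Rule -> Prop, compatible le lab step D)
  (w : nat)
  (Hw_empty : forall t, ~ AddT le S0 lab step w.+1 t)
  (Hw_first : forall j, (1 <= j <= w)%N -> exists t, AddT le S0 lab step j t)
  (i : nat) (Hi : (i <= w)%N) (s : S)
  (Hreach : reach S0 step (P' le S0 lab step i) s) :
  rbn_reachable S0 lab step s.
Proof. exact: main_reach Hcompat i s Hreach. Qed.
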